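(* Let $n,b$ be integers with $1<n<b$, let $p=(d_k,\ldots,d_0)_b=n\cdot(d_{\sigma(k)},\ldots,d_{\sigma(0)})_b$ be an $(n,b,\sigma)$-permutiple with carries $c_0=0,c_1,\ldots,c_k$, let $S=\bigl((c_0,c_1),(c_1,c_2),\ldots,(c_{k-1},c_k),(c_k,c_0)\bigr)$ be its state-transition sequence, and let $s=(d_0,d_{\sigma(0)})(d_1,d_{\sigma(1)})\cdots(d_k,d_{\sigma(k)})$ be its permutiple string. If $\varphi$ is a symmetry of $p$, then the state-transition sequence of the permutiple string $$s_\varphi=(d_{\varphi(0)},d_{\sigma\varphi(0)})(d_{\varphi(1)},d_{\sigma\varphi(1)})\cdots(d_{\varphi(k)},d_{\sigma\varphi(k)})$$ is $S_\varphi=\bigl((c_{\varphi(0)},c_{\varphi(1)}),(c_{\varphi(1)},c_{\varphi(2)}),\ldots,(c_{\varphi(k-1)},c_{\varphi(k)}),(c_{\varphi(k)},c_{\varphi(0)})\bigr)$.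
   Context: For digits $0\le e_i<b$, $(e_k,\ldots,e_0)_b=\sum_i e_ib^i$ (leading zero digits allowed). For a permutation $\tau$ of $\{0,\ldots,k\}$, $(e_k,\ldots,e_0)_b$ is an $(n,b,\tau)$-permutiple if $(e_k,\ldots,e_0)_b=n\cdot(e_{\tau(k)},\ldots,e_{\tau(0)})_b$. Its carries are $c'_0=0$, $c'_{i+1}=\lfloor (ne_{\tau(i)}+c'_i)/b\rfloor$ for $0\le i\le k$ (one has $c'_{k+1}=0$, and $c'_i\le n-1$). Its permutiple string is the word $(e_0,e_{\tau(0)})(e_1,e_{\tau(1)})\cdots(e_k,e_{\tau(k)})$ of ordered digit pairs, and the state-transition sequence of this string is $\bigl((c'_0,c'_1),\ldots,(c'_{k-1},c'_k),(c'_k,c'_{k+1})\bigr)$, where $c'_{k+1}=0=c'_0$: the $i$-th input $(e_i,e_{\tau(i)})$ induces the transition from carry $c'_i$ to carry $c'_{i+1}$ (these satisfy $n e_{\tau(i)}-e_i+c'_i=b c'_{i+1}$). A permutation $\varphi$ of $\{0,\ldots,k\}$ is a symmetry of $p$ if reordering the inputs of $s$ by $\varphi$ gives again a permutiple string, i.e. $(d_{\varphi(k)},\ldots,d_{\varphi(0)})_b=n\cdot(d_{\sigma\varphi(k)},\ldots,d_{\sigma\varphi(0)})_b$, so that $s_\varphi$ is the permutiple string of this $(n,b,\varphi^{-1}\sigma\varphi)$-permutiple. *)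

(* Defs.v *)
From mathcomp Require Import all_boot all_fingroup.
Set Implicit Arguments. Unset Strict Implicit. Unset Printing Implicit Defensive.

Definition numval (b : nat) {k : nat} (e : 'I_k.+1 -> nat) : nat :=
  \sum_(i < k.+1) e i * b ^ i.

Definition is_permutiple (n b k : nat) (e : 'I_k.+1 -> nat) (tau : {perm 'I_k.+1}) : Prop :=
  (forall i, e i < b) /\ numval b e = n * numval b (fun i => e (tau i)).

Fixpoint carry (n b k : nat) (e : 'I_k.+1 -> nat) (tau : {perm 'I_k.+1}) (i : nat) : nat :=
  match i with
  | 0 => 0
  | i'.+1 => (n * e (tau (inord i')) + carry n b e tau i') %/ b
  end.

Definition perm_string (k : nat) (e : 'I_k.+1 -> nat) (tau : {perm 'I_k.+1}) : seq (nat * nat) :=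
  [seq (e i, e (tau i)) | i <- enum 'I_k.+1].

Fixpoint sts_from (n b c : nat) (s : seq (nat * nat)) : seq (nat * nat) :=
  match s with
  | [::] => [::]
  | xy :: s' => let c' := (n * xy.2 + c) %/ b in (c, c') :: sts_from n b c' s'
  end.

Definition state_transition_seq (n b : nat) (s : seq (nat * nat)) : seq (nat * nat) :=
  sts_from n b 0 s.

Definition is_symmetry (n b k : nat) (d : 'I_k.+1 -> nat) (sigma phi : {perm 'I_k.+1}) : Prop :=
  numval b (fun i => d (phi i)) = n * numval b (fun i => d (sigma (phi i))).

(* Main.v *)
Require Import Defs.
From mathcomp Require Import all_boot all_fingroup.
From mathcomp Require Import zify.

Lemma carry_lt n b k (e : 'I_k.+1 -> nat) (tau : {perm 'I_k.+1}) : 0 < n -> (forall i, e i < b) ->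
  forall j, carry n b e tau j < n.
Proof.
move=> n0 eb; have b0 : 0 < b := leq_ltn_trans (leq0n _) (eb ord0).
elim=> [|j IH] //=; rewrite ltn_divLR //.
have := eb (tau (inord j)); nia.
Qed.

Lemma partial n b k (e : 'I_k.+1 -> nat) (tau : {perm 'I_k.+1}) m :
  n * \sum_(0 <= i < m) e (tau (inord i)) * b ^ i =
  \sum_(0 <= i < m) ((n * e (tau (inord i)) + carry n b e tau i) %% b) * b ^ i
  + carry n b e tau m * b ^ m.
Proof.
elim: m => [|m IH]; first by rewrite !big_geq //= muln0.
rewrite !big_nat_recr //= mulnDr IH.
have H := divn_eq (n * e (tau (inord m)) + carry n b e tau m) b.
rewrite expnS.
move: H; set q := (_ %/ b); set r := (_ %% b); set c := carry _ _ _ _ _.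
set S := \sum_(_ <= _ < _ ) _; set F := e _; set p := b ^ m.
nia.
Qed.

Lemma split_digit b x0 y0 A B : x0 < b -> y0 < b -> x0 + b * A = y0 + b * B ->
  x0 = y0 /\ A = B.
Proof.
move=> xb yb H.
have E : x0 = y0.
  have := congr1 (modn^~ b) H; rewrite /= !(mulnC b) !(addnC _ (_ * b)) !modnMDl.
  by rewrite !modn_small.
split=> //; move: H; rewrite E => /addnI /eqP.
rewrite eqn_mul2l; case/orP=> [/eqP b0|/eqP //]; by move: xb; rewrite b0.
Qed.

Lemma digits_uniq b m : forall (x y : nat -> nat) c c',
  (forall i, i < m -> x i < b) -> (forall i, i < m -> y i < b) ->
  \sum_(0 <= i < m) x i * b ^ i + c * b ^ m = \sum_(0 <= i < m) y i * b ^ i + c' * b ^ m ->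
  (forall i, i < m -> x i = y i) /\ c = c'.
Proof.
elim: m => [|m IH] x y c c' xb yb H.
  by move: H; rewrite !big_geq // !muln1 !add0n.
move: H; rewrite !big_nat_recl // !expn0 !muln1.
have sh : forall z : nat -> nat, \sum_(0 <= i < m) z i.+1 * b ^ i.+1
   = b * \sum_(0 <= i < m) z i.+1 * b ^ i.
  by move=> z; rewrite big_distrr; apply: eq_bigr => i _; rewrite expnS mulnCA.
rewrite !sh expnS !(mulnCA _ b) -!addnA -!mulnDr => H.
have [E0 E1] := split_digit _ _ _ _ _ (xb 0 isT) (yb 0 isT) H.
have [Ei Ec] := IH (fun i => x i.+1) (fun i => y i.+1) c c'
  (fun i h => xb i.+1 h) (fun i h => yb i.+1 h) E1.
split=> // -[|i] //= h; exact: Ei.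
Qed.

Lemma perm_digits n b k (e : 'I_k.+1 -> nat) (tau : {perm 'I_k.+1}) : 0 < n -> is_permutiple n b e tau ->
  (forall i : 'I_k.+1, (n * e (tau i) + carry n b e tau i) %% b = e i)
  /\ carry n b e tau k.+1 = 0.
Proof.
move=> n0 [eb H].
have b0 : 0 < b := leq_ltn_trans (leq0n _) (eb ord0).
have E1 : numval b e = \sum_(0 <= i < k.+1) e (inord i) * b ^ i.
  by rewrite big_mkord /numval; apply: eq_bigr => i _; rewrite inord_val.
have E2 : numval b (fun i => e (tau i)) = \sum_(0 <= i < k.+1) e (tau (inord i)) * b ^ i.
  by rewrite big_mkord /numval; apply: eq_bigr => i _; rewrite inord_val.
move: H; rewrite E1 E2 partial => H.
move: (esym H); rewrite -[X in _ = X]addn0 -(mul0n (b ^ k.+1)) => H'.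
have [Ei Ec] := digits_uniq b k.+1 (fun i => (n * e (tau (inord i)) + carry n b e tau i) %% b)
  (fun i => e (inord i)) (carry n b e tau k.+1) 0
  (fun i _ => ltn_pmod _ b0) (fun i _ => eb _) H'.
split=> // i; have := Ei i (ltn_ord i); by rewrite /= inord_val.
Qed.

Lemma sts_iota n b k (e : 'I_k.+1 -> nat) (tau : {perm 'I_k.+1}) (x : nat -> nat) l : forall m,
  sts_from n b (carry n b e tau m) [seq (x j, e (tau (inord j))) | j <- iota m l]
  = [seq (carry n b e tau j, carry n b e tau j.+1) | j <- iota m l].
Proof.
elim: l => [|l IH] m //=; congr (_ :: _); exact: (IH m.+1).
Qed.

Theorem corollary25 (n b k : nat) (d : 'I_k.+1 -> nat) (sigma phi : {perm 'I_k.+1}) :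
  1 < n -> n < b ->
  is_permutiple n b d sigma ->
  is_symmetry n b d sigma phi ->
  let c := carry n b d sigma in
  state_transition_seq n b [seq (d (phi i), d (sigma (phi i))) | i <- enum 'I_k.+1]
  = [seq (c (phi (inord i) : nat), c (phi (inord (i.+1 %% k.+1)) : nat)) | i <- iota 0 k.+1].
Proof.
move=> n1 nb P0 Hs c.
have n0 : 0 < n by apply: ltnW.
have [db _] := P0.
pose tau' := (phi * sigma * phi^-1)%g.
pose e' := fun i => d (phi i).
have He' : forall i, e' (tau' i) = d (sigma (phi i)).
  by move=> i; rewrite /e' /tau' !permM permKV.
have P1 : is_permutiple n b e' tau'.
  split; first by move=> i; apply: db.
  rewrite /e' Hs; congr (_ * _); rewrite /numval; apply: eq_bigr => i _.
  by rewrite -He'.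
have [D1 C1] := perm_digits _ _ _ _ _ n0 P1.
have [D0 C0] := perm_digits _ _ _ _ _ n0 P0.
have key : forall i : 'I_k.+1, carry n b e' tau' i = c (phi i).
  move=> i; have h1 := D1 i; have h0 := D0 (phi i).
  rewrite He' /e' -h0 in h1.
  move/eqP: h1; rewrite eqn_modDl => /eqP.
  rewrite !modn_small // ?(leq_trans _ (ltnW nb)) //; apply: carry_lt => // ?; exact: db.
have -> : [seq (d (phi i), d (sigma (phi i))) | i <- enum 'I_k.+1]
   = [seq (e' (inord j), e' (tau' (inord j))) | j <- iota 0 k.+1].
  rewrite -val_enum_ord -map_comp; apply: eq_map => i /=.
  by rewrite inord_val He'.
rewrite /state_transition_seq.
apply: etrans (sts_iota n b k e' tau' (fun j => e' (inord j)) k.+1 0) _.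
apply/eq_in_map => j; rewrite mem_iota add0n => jk.
have kj : carry n b e' tau' j = c (phi (inord j)).
  by rewrite -key inordK.
have kj' : carry n b e' tau' j.+1 = c (phi (inord (j.+1 %% k.+1))).
  case: (ltngtP j.+1 k.+1) => h.
  - by rewrite modn_small // -key inordK.
  - lia.
  - rewrite h modnn C1.
    by have := key (inord 0); rewrite inordK //= => <-.
by rewrite kj' kj.
Qed.
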